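(* Work in $\mathsf{ZF}$. Let $\mathbb P$ be a forcing notion and let $\mathcal D_{\mathbb P}$ be the class of cardinals $|X|$ such that $\mathbb P$ is ${\leq}|X|$-distributive. Then every natural number (i.e. every finite cardinal) belongs to $\mathcal D_{\mathbb P}$, and $\mathcal D_{\mathbb P}$ is $*$-closed and union-regular.
   Context: Cardinals of non-well-orderable sets are Scott cardinals; $|X|\leq|Y|$ means there is an injection $X\to Y$; $|Y|\leq^*|X|$ means there is a surjection from a subset of $X$ onto $Y$ (or $Y=\varnothing$). $\mathbb P$ is ${\leq}|X|$-distributive if for every family $\langle D_x\mid x\in X\rangle$ of dense open subsets of $\mathbb P$, the set $\bigcap_{x\in X}D_x=\{p\in\mathbb P\mid \forall x\in X\ (p\in D_x)\}$ is dense. A class $\mathcal D$ of cardinals is $*$-closed if whenever $|X|\in\mathcal D$ and $|Y|\leq^*|X|$ then $|Y|\in\mathcal D$. $\mathcal D$ is union-regular if it is directed (under $\leq$) and whenever $|X|\in\mathcal D$ and $\langle A_x\mid x\in X\rangle$ is a sequence of sets with $|A_x|\in\mathcal D$ for all $x\in X$, there is some $|A|\in\mathcal D$ such that $|A_x|\leq|A|$ for all $x\in X$. *)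

(* Defs.v *)
From mathcomp Require Import all_boot.
Set Implicit Arguments. Unset Strict Implicit. Unset Printing Implicit Defensive.

(* A forcing notion: a preorder (P, le) with a maximum element;
   [le q p] means "q extends p" (q is stronger). *)
Record forcing_notion (P : Type) (le : P -> P -> Prop) : Prop := {
  fn_refl  : forall p, le p p;
  fn_trans : forall p q r, le r q -> le q p -> le r p;
  fn_top   : exists one : P, forall p, le p one }.

Definition dense (P : Type) (le : P -> P -> Prop) (D : P -> Prop) : Prop :=
  forall p, exists2 q, le q p & D q.

Definition open_set (P : Type) (le : P -> P -> Prop) (D : P -> Prop) : Prop :=
  forall p q, D p -> le q p -> D q.

Definition distributive (P : Type) (le : P -> P -> Prop) (X : Type) : Prop :=
  forall D : X -> P -> Prop,
    (forall x, dense le (D x) /\ open_set le (D x)) ->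
    dense le (fun p => forall x, D x p).

Definition card_le (X Y : Type) : Prop := exists f : X -> Y, injective f.

Definition card_le_star (Y X : Type) : Prop :=
  (Y -> False) \/
  exists (A : X -> Prop) (f : {x : X | A x} -> Y), forall y, exists a, f a = y.

(* Main.v *)
Require Import Defs.
From mathcomp Require Import all_boot.
From Stdlib Require Import Classical Eqdep.
From mathcomp Require Import all_boot.

Section S.
Variables (P : Type) (le : P -> P -> Prop) (HP : forcing_notion le).

Lemma fin_nat n (D : nat -> P -> Prop) :
  (forall i, i < n -> dense le (D i) /\ open_set le (D i)) ->
  dense le (fun p => forall i, i < n -> D i p).
Proof.
elim: n D => [|n IH] D H p.
  by exists p; [apply: (fn_refl HP) | by []].
have [q Hqp Hq] := IH D (fun i hi => H i (ltnW hi)) p.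
have [Hd Ho] := H n (ltnSn n).
have [r Hrq Hr] := Hd q.
exists r; first exact: (fn_trans HP) Hrq Hqp.
move=> i; rewrite ltnS leq_eqVlt => /orP [/eqP -> //|hi].
have [_ Hoi] := H i (ltn_trans hi (ltnSn n)); exact: Hoi _ _ (Hq i hi) Hrq.
Qed.

Lemma fin_ord n : distributive le 'I_n.
Proof.
move=> D H.
pose D' i := match insub i with Some o => D o | None => fun _ => True end.
have H' : forall i, i < n -> dense le (D' i) /\ open_set le (D' i).
  move=> i hi; rewrite /D' insubT; exact: H.
move=> p; have [q Hqp Hq] := @fin_nat n D' H' p.
exists q => // o; have := Hq (val o) (ltn_ord o).
by rewrite /D' valK.
Qed.

Lemma star_closed X Y : distributive le X -> card_le_star Y X -> distributive le Y.
Proof.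
move=> dX [hY|[A [f hf]]] D H p.
  by exists p; [apply: (fn_refl HP) | move=> y; case: (hY y)].
pose D' x q := forall h : A x, D (f (exist _ x h)) q.
have H' : forall x, dense le (D' x) /\ open_set le (D' x).
  move=> x; split.
    move=> p0; case: (classic (A x)) => [h|nh].
      have [[Hd Ho]] := (H (f (exist _ x h)), tt).
      have [q Hq1 Hq2] := Hd p0; exists q => // h'.
      by rewrite (proof_irrelevance _ h' h).
    by exists p0; [apply: (fn_refl HP) | move=> h; case: (nh h)].
  move=> p0 q Hp Hqp h; exact: (proj2 (H _)) (Hp h) Hqp.
have [q Hqp Hq] := dX D' H' p.
exists q => // y; have [[x h] <-] := hf y; exact: Hq.
Qed.

Lemma sum_dist X Y : distributive le X -> distributive le Y -> distributive le (X + Y).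
Proof.
move=> dX dY D H p.
have [q Hqp Hq] := dX (fun x => D (inl x)) (fun x => H (inl x)) p.
have [r Hrq Hr] := dY (fun y => D (inr y)) (fun y => H (inr y)) q.
exists r; first exact: (fn_trans HP) Hrq Hqp.
case=> [x|y] //; exact: (proj2 (H (inl x))) (Hq x) Hrq.
Qed.

Lemma sig_dist X (A : X -> Type) : distributive le X -> (forall x, distributive le (A x)) ->
  distributive le {x : X & A x}.
Proof.
move=> dX dA D H p.
pose D' x q := forall a : A x, D (existT _ x a) q.
have H' : forall x, dense le (D' x) /\ open_set le (D' x).
  move=> x; split.
    exact: (dA x (fun a => D (existT _ x a)) (fun a => H _)).
  move=> p0 q Hp Hqp a; exact: (proj2 (H _)) (Hp a) Hqp.
have [q Hqp Hq] := dX D' H' p.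
by exists q => // -[x a]; apply: Hq.
Qed.
End S.

Theorem theorem3p4 (P : Type) (le : P -> P -> Prop) (HP : forcing_notion le) :
  (* every finite cardinal belongs to D_P *)
  (forall n : nat, distributive le 'I_n) /\
  (* D_P is *-closed *)
  (forall X Y : Type, distributive le X -> card_le_star Y X -> distributive le Y) /\
  (* D_P is union-regular: directed ... *)
  (forall X Y : Type, distributive le X -> distributive le Y ->
     exists Z : Type, [/\ distributive le Z, card_le X Z & card_le Y Z]) /\
  (* ... and closed under bounding D_P-indexed families of D_P-sized sets *)
  (forall (X : Type) (A : X -> Type),
     distributive le X -> (forall x, distributive le (A x)) ->
     exists B : Type, distributive le B /\ forall x, card_le (A x) B).
Proof.
split; first exact: fin_ord HP.
split; first exact: star_closed HP.
split.
  move=> X Y dX dY; exists (X + Y)%type; split.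
  - exact: sum_dist HP X Y dX dY.
  - by exists inl => a b [].
  - by exists inr => a b [].
move=> X A dX dA; exists {x : X & A x}; split; first exact: sig_dist dX dA.
move=> x; exists (fun a => existT _ x a) => a b; exact: inj_pair2.
Qed.
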